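(* Let $\mathcal{U},\mathcal{Y}$ be Hilbert spaces, $\mathcal{F}$ a closed subspace of $\mathcal{U}$, and $\omega=\begin{pmatrix}\omega_1\\ \omega_2\end{pmatrix}:\mathcal{F}\to\mathcal{Y}\oplus\mathcal{U}$ a contraction. If either $\omega_1$ is a strict contraction (i.e. $\|\omega_1\|<1$) or $\dim(\mathcal{U})<\infty$, then the condition ''$\omega_1(\Pi_{\mathcal{F}}\omega_2)^n:\mathcal{F}\to\mathcal{Y}$ is a co-isometry for every $n=0,1,2,\ldots$'' is equivalent to $\mathcal{Y}=\{0\}$.
   Context: $\Pi_{\mathcal{F}}:\mathcal{U}\to\mathcal{F}$ is the orthogonal projection. *)

(* Defs.v *)
From mathcomp Require Import all_boot all_order all_algebra.
From mathcomp Require Import reals realfun complex.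
Set Implicit Arguments. Unset Strict Implicit. Unset Printing Implicit Defensive.
Import Order.TTheory GRing.Theory Num.Theory.
Local Open Scope ring_scope.

Section Hilbert.
Variable C : numClosedFieldType.

Section OneSpace.
Variable V : lmodType C.
Variable ip : V -> V -> C.

Definition inner_product : Prop :=
  [/\ forall a x y z, ip (a *: x + y) z = a * ip x z + ip y z,
      forall x y, ip y x = (ip x y)^*,
      forall x, 0 <= ip x x &
      forall x, ip x x = 0 -> x = 0].

Definition ipnorm (x : V) : C := sqrtC (ip x x).

Definition converges_to (u : nat -> V) (l : V) : Prop :=
  forall eps : C, 0 < eps -> exists N, forall n, (N <= n)%N -> ipnorm (u n - l) < eps.

Definition cauchy (u : nat -> V) : Prop :=
  forall eps : C, 0 < eps -> exists N, forall m n, (N <= m)%N -> (N <= n)%N ->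
    ipnorm (u m - u n) < eps.

Definition ip_complete : Prop :=
  forall u : nat -> V, cauchy u -> exists l, converges_to u l.

Definition hilbert_space : Prop := inner_product /\ ip_complete.

Definition closed_subspace (F : V -> Prop) : Prop :=
  [/\ F 0,
      forall a x y, F x -> F y -> F (a *: x + y) &
      forall u l, (forall n, F (u n)) -> converges_to u l -> F l].

Definition orth_proj (F : V -> Prop) (P : V -> V) : Prop :=
  forall x, F (P x) /\ (forall f, F f -> ip (x - P x) f = 0).

Definition finite_dim : Prop :=
  exists n (b : 'I_n -> V), forall x, exists c : 'I_n -> C, x = \sum_(i < n) c i *: b i.

End OneSpace.

Section Operators.
Variables (U Y : lmodType C).

(* T : F -> Y is linear (F a subspace of U; values of T off F are irrelevant) *)
Definition linear_on (F : U -> Prop) (T : U -> Y) : Prop :=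
  forall a x y, F x -> F y -> T (a *: x + y) = a *: T x + T y.

(* T : F -> Y is a co-isometry: T T^* = I, where T^* : Y -> F is the adjoint *)
Definition coisometry_on (ipU : U -> U -> C) (F : U -> Prop)
    (ipY : Y -> Y -> C) (T : U -> Y) : Prop :=
  exists S : Y -> U,
    [/\ forall y, F (S y),
        forall x y, F x -> ipY (T x) y = ipU x (S y) &
        forall y, T (S y) = y].

Definition strict_contraction_on (ipU : U -> U -> C) (F : U -> Prop)
    (ipY : Y -> Y -> C) (T : U -> Y) : Prop :=
  exists c : C, c < 1 /\ forall x, F x -> ipnorm ipY (T x) <= c * ipnorm ipU x.
End Operators.

Definition contraction2_on (U Y : lmodType C) (ipU : U -> U -> C) (F : U -> Prop)
    (ipY : Y -> Y -> C) (w1 : U -> Y) (w2 : U -> U) : Prop :=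
  [/\ linear_on F w1, linear_on F w2 &
      forall x, F x -> sqrtC (ipY (w1 x) (w1 x) + ipU (w2 x) (w2 x)) <= ipnorm ipU x].

End Hilbert.

(* Main.v *)
Require Import Defs.
From mathcomp Require Import all_boot all_order all_algebra.
From mathcomp Require Import reals realfun complex.
From mathcomp Require Import zify.
Import Order.TTheory GRing.Theory Num.Theory.
Set Implicit Arguments. Unset Strict Implicit. Unset Printing Implicit Defensive.
Local Open Scope ring_scope.

Section IP.
Variable C : numClosedFieldType.
Variable V : lmodType C.
Variable ip : V -> V -> C.
Hypothesis hip : inner_product ip.

Lemma ip0l z : ip 0 z = 0.
Proof.
case: hip => h _ _ _; have := h 1 0 0 z; rewrite scale1r addr0 mul1r.
by move/esym/eqP; rewrite -subr_eq0 addrK => /eqP.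
Qed.

Lemma ipDl x y z : ip (x + y) z = ip x z + ip y z.
Proof. by case: hip => h _ _ _; rewrite -[x in LHS]scale1r h mul1r. Qed.

Lemma ipZl a x z : ip (a *: x) z = a * ip x z.
Proof. by case: hip => h _ _ _; rewrite -[_ *: _]addr0 h ip0l addr0. Qed.

Lemma ipNl x z : ip (- x) z = - ip x z.
Proof. by rewrite -scaleN1r ipZl mulN1r. Qed.

Lemma ipBl x y z : ip (x - y) z = ip x z - ip y z.
Proof. by rewrite ipDl ipNl. Qed.

Lemma ipC x y : ip y x = (ip x y)^*.
Proof. by case: hip. Qed.

Lemma ip0r z : ip z 0 = 0.
Proof. by rewrite ipC ip0l rmorph0. Qed.

Lemma ipDr x y z : ip z (x + y) = ip z x + ip z y.
Proof. by rewrite [ip z x]ipC [ip z y]ipC ipC ipDl rmorphD. Qed.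

Lemma ipNr x z : ip z (- x) = - ip z x.
Proof. by rewrite [ip z x]ipC ipC ipNl rmorphN. Qed.

Lemma ipBr x y z : ip z (x - y) = ip z x - ip z y.
Proof. by rewrite ipDr ipNr. Qed.

Lemma ip_ge0 x : 0 <= ip x x.
Proof. by case: hip. Qed.

Lemma ip_eq0 x : ip x x = 0 -> x = 0.
Proof. by case: hip => _ _ _; apply. Qed.

Lemma ip_neq0 x : ip x x != 0 -> x != 0.
Proof. by move=> h; apply/eqP => e; move: h; rewrite e ip0l eqxx. Qed.

Variable F : V -> Prop.
Hypothesis hF : closed_subspace ip F.
Variable P : V -> V.
Hypothesis hP : orth_proj ip F P.

Lemma FB x y : F x -> F y -> F (x - y).
Proof. case: hF => _ h _ fx fy; by rewrite addrC -scaleN1r; apply: h. Qed.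

Lemma FD x y : F x -> F y -> F (x + y).
Proof. case: hF => _ h _ fx fy; by rewrite -[x]scale1r; apply: h. Qed.

Lemma FZ a x : F x -> F (a *: x).
Proof. case: hF => F0 h _ fx; by rewrite -[_ *: _]addr0; apply: h. Qed.

Lemma F0 : F 0.
Proof. by case: hF. Qed.

Lemma PF x : F (P x).
Proof. by case: (hP x). Qed.

Lemma Porth x f : F f -> ip (x - P x) f = 0.
Proof. by case: (hP x) => _; apply. Qed.

Lemma Pid f : F f -> P f = f.
Proof.
move=> Ff; apply/eqP; rewrite eq_sym -subr_eq0; apply/eqP/ip_eq0.
by apply: Porth; apply: FB => //; apply: PF.
Qed.

Lemma Plin a x y : P (a *: x + y) = a *: P x + P y.
Proof.
set u := a *: x + y.
have Fd : F (P u - (a *: P x + P y)) by apply: FB; [apply: PF|apply: FD; [apply: FZ; apply: PF|apply: PF]].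
apply/eqP; rewrite -subr_eq0; apply/eqP/ip_eq0.
set d := P u - (a *: P x + P y).
have e : d = (u - (a *: P x + P y)) - (u - P u).
  by rewrite opprB [RHS]addrC addrA subrK.
rewrite {1}e.
have -> : u - (a *: P x + P y) = a *: (x - P x) + (y - P y).
  by rewrite /u scalerBr opprD addrACA.
by rewrite ipBl ipDl ipZl !(Porth _ Fd) mulr0 addr0 subr0.
Qed.

Lemma Pyth x :
  ip x x = ip (P x) (P x) + ip (x - P x) (x - P x).
Proof.
have Fp := PF x.
set d := x - P x.
have e : x = P x + d by rewrite /d addrC subrK.
have h1 : ip d (P x) = 0 by apply: Porth.
have h2 : ip (P x) d = 0 by rewrite ipC h1 rmorph0.
clearbody d; rewrite {1 2}e !ipDl !ipDr h1 h2.
by rewrite addr0 add0r.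
Qed.

Lemma P_le x :
  ip (P x) (P x) <= ip x x.
Proof. by rewrite [X in _ <= X]Pyth lerDl ip_ge0. Qed.


End IP.

Section Lin.
Variable C : fieldType.
Variable V : lmodType C.
Variable f : V -> V.
Hypothesis hf : forall a x y, f (a *: x + y) = a *: f x + f y.

Lemma lin0 : f 0 = 0.
Proof.
have := hf 1 0 0; rewrite !scale1r addr0 => /esym/eqP.
by rewrite -subr_eq0 addrK => /eqP.
Qed.

Lemma linZ a x : f (a *: x) = a *: f x.
Proof. by rewrite -[a *: x]addr0 hf lin0 addr0. Qed.

Lemma linD x y : f (x + y) = f x + f y.
Proof. by have := hf 1 x y; rewrite !scale1r. Qed.

Lemma lin_sum n (g : 'I_n -> V) : f (\sum_(i < n) g i) = \sum_(i < n) f (g i).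
Proof.
elim/big_rec2: _ => [|i y1 y2 _ <-]; first exact: lin0.
by rewrite linD.
Qed.

Lemma iter_lin k a x y : iter k f (a *: x + y) = a *: iter k f x + iter k f y.
Proof. by elim: k => //= k ->; rewrite hf. Qed.

Lemma iter0 k : iter k f 0 = 0.
Proof. by elim: k => //= k ->; rewrite lin0. Qed.

End Lin.

Section Chain.
Variable C : fieldType.
Variable V : lmodType C.
Variable f : V -> V.
Hypothesis hf : forall a x y, f (a *: x + y) = a *: f x + f y.

Lemma chain_indep (x : V) (m n : nat) : (m <= n)%N ->
  iter n f x != 0 -> iter n.+1 f x = 0 ->
  forall a : 'I_m.+1 -> C, \sum_(k < m.+1) a k *: iter k f x = 0 -> forall k, a k = 0.
Proof.
move=> mn nz z a hs.
have step : forall j : 'I_m.+1, (forall k : 'I_m.+1, (k < j)%N -> a k = 0) -> a j = 0.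
  move=> j hj.
  have g := congr1 (iter (n - j) f) hs.
  have hl : forall a x y, iter (n - j) f (a *: x + y) = a *: iter (n - j) f x + iter (n - j) f y.
    by move=> *; apply: iter_lin.
  rewrite (iter0 hf) (lin_sum hl) (bigD1 j) //= big1 ?addr0 in g.
    move: g; rewrite (linZ hl) -iterD subnK; last first.
      by apply: leq_trans mn; rewrite -ltnS.
    by move/eqP; rewrite scaler_eq0 (negbTE nz) orbF => /eqP.
  move=> k kj; rewrite (linZ hl).
  case: (ltngtP k j) => [kj'|jk|/val_inj ekj]; last by rewrite ekj eqxx in kj.
    by rewrite hj // scale0r.
  rewrite -iterD.
  have -> : (n - j + k = (k - j.+1) + n.+1)%N.
    have : (j <= n)%N by apply: leq_trans mn; rewrite -ltnS.
    by move: jk; clear; lia.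
  by rewrite iterD z (iter0 hf) scaler0.
have all : forall j, forall k : 'I_m.+1, (k < j)%N -> a k = 0.
  elim=> [//|j IH] k; rewrite ltnS leq_eqVlt => /orP[/eqP ekj|]; last exact: IH.
  by apply: step => k'; rewrite ekj; apply: IH.
by move=> k; apply: (all k.+1); rewrite ltnS.
Qed.

Lemma chain_dim (x : V) (m n : nat) (b : 'I_m -> V)
  (hb : forall x, exists c : 'I_m -> C, x = \sum_(i < m) c i *: b i) :
  iter n f x != 0 -> iter n.+1 f x = 0 -> (n < m)%N.
Proof.
move=> nz z; rewrite ltnNge; apply/negP => mn.
have [c hc] := fin_all_exists (fun k : 'I_m.+1 => hb (iter k f x)).
pose M := \matrix_(k < m.+1, i < m) c k i.
have : kermx M != 0.
  rewrite kermx_eq0; apply/negP => /eqP h; have := rank_leq_col M.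
  by rewrite h ltnn.
case/rowV0Pn => v /sub_kermxP vM vnz.
have hs : \sum_(k < m.+1) v 0 k *: iter k f x = 0.
  transitivity (\sum_(i < m) (v *m M) 0 i *: b i); last first.
    by rewrite vM big1 // => i _; rewrite mxE scale0r.
  under eq_bigr => k _ do rewrite [iter _ _ _]hc scaler_sumr.
  rewrite exchange_big /=; apply: eq_bigr => i _.
  rewrite mxE scaler_suml; apply: eq_bigr => k _.
  by rewrite mxE scalerA.
have := chain_indep mn nz z hs => v0.
move/eqP: vnz; apply; apply/rowP => k; rewrite mxE (v0 k).
by [].
Qed.
End Chain.

Theorem proposition2p2 (R : realType) (U Y : lmodType R[i])
  (ipU : U -> U -> R[i]) (ipY : Y -> Y -> R[i])
  (hU : hilbert_space ipU) (hY : hilbert_space ipY)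
  (F : U -> Prop) (hF : closed_subspace ipU F)
  (PiF : U -> U) (hPi : orth_proj ipU F PiF)
  (w1 : U -> Y) (w2 : U -> U) (hw : contraction2_on ipU F ipY w1 w2) :
  strict_contraction_on ipU F ipY w1 \/ finite_dim U ->
  ((forall n : nat,
      coisometry_on ipU F ipY (fun x => w1 (iter n (fun z => PiF (w2 z)) x)))
   <-> (forall y : Y, y = 0)).
Proof.
case: hU => hU _; case: hY => hY _.
case: hw => hw1 hw2 hwc.
move=> hcase; split; last first.
  move=> Y0 n; exists (fun _ => 0); split.
  - by move=> _; apply: (F0 hF).
  - by move=> x y _; rewrite (Y0 y) (ip0r hY) (ip0r hU).
  - by move=> y; rewrite (Y0 y) (Y0 (w1 _)).
move=> hco y; apply: (ip_eq0 hY).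
case: hcase => [[c [c1 hc]] | [m [b hb]]].
  have [S [SF Sadj SK]] := hco 0%N.
  have hadj : ipY y y = ipU (S y) (S y).
    by have := Sadj (S y) y (SF y); rewrite /= (SK y).
  have := hc (S y) (SF y); move: (SK y) => /= ->.
  rewrite /ipnorm -hadj.
  have : 0 <= sqrtC (ipY y y) by rewrite sqrtC_ge0 (ip_ge0 hY).
  rewrite le0r => /orP[|spos].
    by rewrite sqrtC_eq0 => /eqP.
  move=> hle; have : c * sqrtC (ipY y y) < sqrtC (ipY y y) by rewrite gtr_pMl.
  by move/(le_lt_trans hle); rewrite ltxx.
case: (eqVneq (ipY y y) 0) => [//|ynz]; exfalso.
pose A := fun z => PiF (w2 z).
pose A' := fun z => PiF (w2 (PiF z)).
have Alin : forall a x y, A' (a *: x + y) = a *: A' x + A' y.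
  move=> a x1 x2; rewrite /A' (Plin hU hF hPi) hw2.
  - exact: (Plin hU hF hPi).
  - exact: (PF hPi).
  - exact: (PF hPi).
have AF : forall x, F x -> F (A' x) by move=> x _; apply: (PF hPi).
have AA : forall x, F x -> A x = A' x by move=> x Fx; rewrite /A /A' (Pid hU hF hPi Fx).
have iterF : forall k x, F x -> iter k A x = iter k A' x /\ F (iter k A' x).
  move=> k x Fx; elim: k => [//|k [IH1 IH2]] /=.
  by rewrite IH1 AA //; split=> //; apply: AF.
have Acon : forall z, F z -> ipU (A' z) (A' z) <= ipU z z.
  move=> z Fz; rewrite /A' (Pid hU hF hPi Fz).
  apply: le_trans (P_le hU hPi _) _.
  have := hwc z Fz; rewrite /ipnorm ler_sqrtC ?nnegrE ?addr_ge0 ?(ip_ge0 hU) ?(ip_ge0 hY) //.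
  by apply: le_trans; rewrite lerDr (ip_ge0 hY).
have [S [SF Sadj SK]] := hco m.
set x := S y.
have Fx : F x := SF y.
have [eqi Fz] := iterF m x Fx.
set z := iter m A' x in Fz eqi.
have w1z : w1 z = y by rewrite -eqi; apply: SK.
have hadj : ipY y y = ipU x x.
  by have := Sadj x y Fx; rewrite /= (SK y).
have decr : forall k, ipU (iter k A' x) (iter k A' x) <= ipU x x.
  elim=> [//|k IH] /=; apply: le_trans IH.
  by apply: Acon; case: (iterF k x Fx).
have cz : ipY y y + ipU (w2 z) (w2 z) <= ipU z z.
  have := hwc z Fz; rewrite /ipnorm w1z.
  by rewrite ler_sqrtC ?nnegrE ?addr_ge0 ?(ip_ge0 hU) ?(ip_ge0 hY).
have zle : ipU z z <= ipY y y by rewrite hadj; apply: decr.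
have w2z : w2 z = 0.
  apply: (ip_eq0 hU); apply/eqP; rewrite eq_le (ip_ge0 hU) andbT.
  by rewrite -(gerDl (ipY y y)); apply: le_trans cz zle.
have Az : iter m.+1 A' x = 0.
  by rewrite iterS -/z /A' (Pid hU hF hPi Fz) w2z -(scale0r 0) -[_ *: 0]addr0 (Plin hU hF hPi) !(Pid hU hF hPi (F0 hF)) scale0r addr0.
have znz : iter m A' x != 0.
  apply: (ip_neq0 hU); rewrite -/z; apply: contra_neq ynz => z0.
  apply/eqP; rewrite eq_le (ip_ge0 hY) andbT -z0.
  by apply: le_trans cz; rewrite lerDl (ip_ge0 hU).
by have := chain_dim Alin hb znz Az; rewrite ltnn.
Qed.
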